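(* Let $\mathcal V$ be a finite vocabulary, $C\ge 2$, $\gamma\in\mathbb R$, and let $s,v:\mathcal V\to\mathbb R$ be unknown maps satisfying $\sum_{\tau\in\mathcal V}s(\tau)=\gamma$. Let $G(\mathbf t)=F^{\mathrm{SLALOM}}_{s,v}(\mathbf t)$ for all sequences $\mathbf t$ over $\mathcal V$ with $1\le|\mathbf t|\le C$, and assume $G$ is non-constant on this set of sequences. Then, given $\gamma$ and query access to $G$, the maps $s$ and $v$ can be recovered exactly using $2|\mathcal V|-1$ queries of $G$, all on sequences of length at most $2$ (the queried sequences may be chosen adaptively based on previous answers). In particular, $s$ and $v$ are uniquely determined by $G$ together with $\gamma$.
   Context: SLALOM (Softmax-Linked Additive Log Odds Model): given a token importance map $s:\mathcal V\to\mathbb R$ and a token value map $v:\mathcal V\to\mathbb R$, for a sequence $\mathbf t$ define $\alpha_i(\mathbf t)=\exp(s(t_i))/\sum_{j=1}^{|\mathbf t|}\exp(s(t_j))$ and $F^{\mathrm{SLALOM}}_{s,v}(\mathbf t)=\sum_{i=1}^{|\mathbf t|}\alpha_i(\mathbf t)\,v(t_i)$ (sums over positions, counting repeated tokens with multiplicity). The normalization constraint is $\sum_{\tau\in\mathcal V}s(\tau)=\gamma$ for a fixed user-chosen $\gamma\in\mathbb R$. *)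

(* Defs.v *)
From HB Require Import structures.
From mathcomp Require Import all_boot all_order all_algebra.
From mathcomp Require Import all_classical all_reals all_analysis.
Set Implicit Arguments. Unset Strict Implicit. Unset Printing Implicit Defensive.
Import Order.TTheory GRing.Theory Num.Theory.
Local Open Scope ring_scope.

(* SLALOM: sums over positions of t (repeated tokens counted with multiplicity). *)
Definition slalom_alpha (R : realType) (V : Type) (s : V -> R) (t : seq V) (x : V) : R :=
  expR (s x) / \sum_(y <- t) expR (s y).

Definition slalom (R : realType) (V : Type) (s v : V -> R) (t : seq V) : R :=
  \sum_(x <- t) slalom_alpha s t x * v x.

Definition nonconst_on (R : realType) (V : Type) (C : nat) (G : seq V -> R) : Prop :=
  exists t1 t2 : seq V,
    [/\ (0 < size t1 <= C)%N, (0 < size t2 <= C)%N & G t1 <> G t2].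

(* An adaptive (deterministic) query strategy: the next query is chosen as a
   function of the answers received so far; the final output is a function of
   all answers. *)
Record strategy (V : Type) (R : Type) := Strategy {
  query : seq R -> seq V;
  output : seq R -> (V -> R) * (V -> R) }.

Fixpoint run (V : Type) (R : Type) (G : seq V -> R) (S : strategy V R) (k : nat)
  : seq R :=
  match k with
  | 0 => [::]
  | k'.+1 => let h := run G S k' in rcons h (G (query S h))
  end.

(* Main.v *)
Set Warnings "-notation-overridden,-ambiguous-paths,-notation-incompatible-prefix".
Require Import Defs.
From HB Require Import structures.
From mathcomp Require Import all_boot all_order all_algebra.
From mathcomp Require Import all_classical all_reals all_analysis.
From mathcomp Require Import ring lra zify.
Import Order.TTheory GRing.Theory Num.Theory.
Local Open Scope ring_scope.

Lemma size_run (V R : Type) (G : seq V -> R) S k : size (run G S k) = k.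
Proof. by elim: k => //= k IH; rewrite size_rcons IH. Qed.

Lemma nth_run (V : Type) (R : Type) (x0 : R) (G : seq V -> R) S k j :
  (j < k)%N -> nth x0 (run G S k) j = G (query S (run G S j)).
Proof.
elim: k => // k IH; rewrite ltnS leq_eqVlt => /orP [/eqP ->|lt] /=.
  by rewrite nth_rcons size_run ltnn eqxx.
by rewrite nth_rcons size_run lt IH.
Qed.

Lemma run_ext (V R : Type) (G1 G2 : seq V -> R) S K :
  (forall h, (size h < K)%N -> G1 (query S h) = G2 (query S h)) ->
  forall k, (k <= K)%N -> run G1 S k = run G2 S k.
Proof.
move=> H; elim => // k IH lt /=.
rewrite IH ?(ltnW lt) // H // size_run; done.
Qed.

Lemma slalom1 (R : realType) (V : Type) (s v : V -> R) x : slalom s v [:: x] = v x.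
Proof.
rewrite /slalom /slalom_alpha !big_cons !big_nil !addr0 divff ?mul1r //.
by rewrite gt_eqF // expR_gt0.
Qed.

Lemma slalom2 (R : realType) (V : Type) (s v : V -> R) a b : v a != v b ->
  ln ((slalom s v [:: a; b] - v b) / (v a - slalom s v [:: a; b])) = s a - s b.
Proof.
move=> nab.
have ea := expR_gt0 (s a); have eb := expR_gt0 (s b).
have Sp : 0 < expR (s a) + expR (s b) by rewrite addr_gt0.
rewrite /slalom /slalom_alpha !big_cons !big_nil !addr0.
set S := expR (s a) + expR (s b).
have S0 : S != 0 by rewrite gt_eqF.
have h1 : v a - v b != 0 by rewrite subr_eq0.
have -> : expR (s a) / S * v a + expR (s b) / S * v b - v b = expR (s a) * (v a - v b) / S.
  rewrite /S; field; exact: S0.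
have -> : v a - (expR (s a) / S * v a + expR (s b) / S * v b) = expR (s b) * (v a - v b) / S.
  rewrite /S; field; exact: S0.
have -> : expR (s a) * (v a - v b) / S / (expR (s b) * (v a - v b) / S) = expR (s a) / expR (s b).
  field; rewrite S0 h1 gt_eqF //.
by rewrite -expRB expRK.
Qed.

Lemma slalom_const (R : realType) (V : Type) (s v : V -> R) c t :
  (forall x, v x = c) -> (0 < size t)%N -> slalom s v t = c.
Proof.
move=> hv; case: t => // x t _.
rewrite /slalom /slalom_alpha.
under eq_bigr => y _ do rewrite hv.
rewrite -big_distrl /= -mulr_suml divff ?mul1r //.
rewrite big_cons gt_eqF // ltr_pwDl ?expR_gt0 // sumr_ge0 //.
Qed.

Section Strat.
Variables (R : realType) (V : finType) (gamma : R) (d : V).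

Definition vf (h : seq R) (x : V) : R := nth 0 h (index x (enum V)).
Definition x1f h := nth d (enum V) (find (fun x => vf h x != vf h d) (enum V)).
Definition partner h y := if vf h y != vf h d then d else x1f h.
Definition qry (h : seq R) : seq V :=
  if (size h < #|V|)%N then [:: nth d (enum V) (size h)]
  else let y := nth d (enum V) (size h - #|V|).+1 in [:: y; partner h y].
Definition gans (h : seq R) y := nth 0 h (#|V| + index y (enum V)).-1.
Definition rr h a b g := ln ((g - vf h b) / (vf h a - g)).
Definition dif h y := if y == d then 0 else
  if vf h y != vf h d then rr h y d (gans h y)
  else rr h y (x1f h) (gans h y) + rr h (x1f h) d (gans h (x1f h)).
Definition sout h y := dif h y + (gamma - \sum_x dif h x) / #|V|%:R.
Definition Sd : strategy V R := Strategy qry (fun h => (sout h, vf h)).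

Lemma qry_size h : (0 < size (qry h) <= 2)%N.
Proof. by rewrite /qry; case: ifP. Qed.

Lemma Sd_correct e' (C : nat) (s v : V -> R) : enum V = d :: e' ->
  \sum_(tau : V) s tau = gamma -> nonconst_on C (slalom s v) ->
  output Sd (run (slalom s v) Sd (2 * #|V|).-1) = (s, v).
Proof.
move=> E hs [t1 [t2 [st1 st2 neq]]].
set G := slalom s v.
have n0 : (0 < #|V|)%N by rewrite cardE E.
have vrun k x : (#|V| <= k)%N -> vf (run G Sd k) x = v x.
  move=> nk; have ix : (index x (enum V) < #|V|)%N by rewrite cardE index_mem mem_enum.
  rewrite /vf nth_run ?(leq_trans ix) //= /qry size_run ix nth_index ?mem_enum //.
  exact: slalom1.
have vrunf k : (#|V| <= k)%N -> vf (run G Sd k) = v.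
  by move=> nk; apply/funext => x; apply: vrun.
set N := (2 * #|V|).-1.
have nN : (#|V| <= N)%N by rewrite /N; lia.
set H := run G Sd N.
have vH : vf H = v by exact: vrunf.
have [x1' hx1'] : exists x, v x != v d.
  apply/existsP; apply: contraT; rewrite negb_exists => /forallP hc.
  have hc' : forall x, v x = v d by move=> x; move: (hc x); rewrite negbK => /eqP.
  by case: neq; rewrite /G !(@slalom_const _ _ s v (v d) _ hc') //; case/andP: st1 => //; case/andP: st2.
set x1 := nth d (enum V) (find (fun x => v x != v d) (enum V)).
have hx1 : v x1 != v d.
  apply: (@nth_find _ d (fun x => v x != v d)); apply/hasP; exists x1'; rewrite ?mem_enum //.
have x1k k : (#|V| <= k)%N -> x1f (run G Sd k) = x1 by move=> nk; rewrite /x1f vrunf.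
set P := fun y => if v y != v d then d else x1.
have gH y : y != d -> gans H y = G [:: y; P y].
  move=> yd.
  have ix : (index y (enum V) < #|V|)%N by rewrite cardE index_mem mem_enum.
  have i0 : (0 < index y (enum V))%N by rewrite E /= eq_sym (negbTE yd).
  set j := index y (enum V) in ix i0 *.
  rewrite /gans nth_run; last by rewrite /N; lia.
  have nk : (#|V| <= (#|V| + j).-1)%N by lia.
  rewrite /= /qry size_run ltnNge nk /=.
  have -> : ((#|V| + j).-1 - #|V|).+1 = j by lia.
  rewrite nth_index ?mem_enum // /partner vrunf // x1k //.
have rH a b : v a != v b -> rr H a b (G [:: a; b]) = s a - s b.
  by move=> ab; rewrite /rr vH; exact: slalom2.
have x1d : x1 != d by apply/eqP => ex; rewrite ex eqxx in hx1.
have dH y : dif H y = s y - s d.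
  rewrite /dif; case: eqP => [->|/eqP yd]; first by rewrite subrr.
  rewrite vH gH // /P; case: ifP => hy; rewrite hy; first exact: rH.
  rewrite /x1f vH -/x1 gH // /P hx1 !rH //.
    by rewrite addrA subrK.
  by move/negbFE/eqP: hy => ->; rewrite eq_sym.
rewrite /= vH; congr pair; apply/funext => y.
rewrite /sout dH; under eq_bigr => x _ do rewrite dH.
rewrite sumrB hs sumr_const.
rewrite -[s d *+ _]/(s d *+ #|V|) -mulr_natr.
have nz : (#|V|%:R : R) != 0 by rewrite pnatr_eq0 -lt0n.
rewrite -mulr_natr; field; exact: nz.
Qed.
End Strat.

Theorem proposition5p2 (R : realType) (V : finType) (C : nat) (gamma : R) :
  (2 <= C)%N ->
  (exists S : strategy V R,
     (forall h : seq R, (size h < (2 * #|V|).-1)%N ->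
        (0 < size (query S h) <= 2)%N) /\
     (forall s v : V -> R,
        \sum_(tau : V) s tau = gamma ->
        nonconst_on C (slalom s v) ->
        output S (run (slalom s v) S (2 * #|V|).-1) = (s, v)))
  /\
  (forall s v s' v' : V -> R,
     \sum_(tau : V) s tau = gamma -> \sum_(tau : V) s' tau = gamma ->
     nonconst_on C (slalom s v) ->
     (forall t : seq V, (0 < size t <= C)%N -> slalom s v t = slalom s' v' t) ->
     s = s' /\ v = v').
Proof.
move=> C2.
have part1 : exists S : strategy V R,
     (forall h : seq R, (size h < (2 * #|V|).-1)%N ->
        (0 < size (query S h) <= 2)%N) /\
     (forall s v : V -> R,
        \sum_(tau : V) s tau = gamma ->
        nonconst_on C (slalom s v) ->
        output S (run (slalom s v) S (2 * #|V|).-1) = (s, v)).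
  case E: (enum V) => [|d e'].
    exists (Strategy (fun _ => [::]) (fun _ => (fun _ => 0, fun _ => 0))); split.
      by move=> h; rewrite cardE E.
    move=> s v _ [[|x t1] [t2 [st1 _ _]]] //.
    by have := mem_enum V x; rewrite E.
  exists (@Sd R V gamma d); split; first by move=> h _; exact: (@qry_size R V d).
  by move=> s v hs hn; apply: (@Sd_correct R V gamma d e' C s v E).
split => //.
case: part1 => S [hq hc] s v s' v' hs hs' hn hG.
have hn' : nonconst_on C (slalom s' v').
  case: hn => t1 [t2 [st1 st2 ne]]; exists t1, t2; split => //.
  by rewrite -!hG.
have er : run (slalom s v) S (2 * #|V|).-1 = run (slalom s' v') S (2 * #|V|).-1.
  apply: (@run_ext _ _ _ _ S (2 * #|V|).-1) => // h hh; have hs2 := hq h hh; apply: hG.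
  case/andP: hs2 => -> /= h2; exact: leq_trans h2 C2.
have := hc _ _ hs hn; rewrite er hc //.
by case=> -> ->.
Qed.
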